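(* Assume $CA_2$. Then there is a coloring $o:[\omega_1]^2\to\omega$ such that for every uncountable family $\mathcal A\subseteq[\omega_1]^{<\omega}$ of pairwise disjoint sets and every $n\in\omega$ there are $a,b\in\mathcal A$ with $a<b$ such that $o(\alpha,\beta)=n$ for all $\alpha\in a$ and $\beta\in b$.
   Context: For finite sets of ordinals, $a<b$ means every element of $a$ is below every element of $b$. A type is a sequence $\tau=\{(m_k,n_{k+1},r_{k+1})\}_{k\in\omega}$ of natural numbers with $m_0=1$; $n_k\ge2$ for $k\ge1$; every $r\in\omega$ equals $r_k$ for infinitely many $k$; $m_k>r_{k+1}$; and $m_{k+1}=r_{k+1}+(m_k-r_{k+1})n_{k+1}$ for all $k$. For a set of ordinals $X$ and $\mathcal F\subseteq[X]^{<\omega}$, $\mathcal F_k$ is the set of elements of rank $k$ in $(\mathcal F,\subsetneq)$; $A\sqsubseteq B$ means $A\subseteq B$ and every element of $B$ below an element of $A$ is in $A$. $\mathcal F$ is a construction scheme over $X$ of type $\tau$ if (1) every finite subset of $X$ lies in a member of $\mathcal F$; (2) $|F|=m_k$ for $F\in\mathcal F_k$; (3) $E\cap F\sqsubseteq E,F$ for $E,F\in\mathcal F_k$; (4) each $F\in\mathcal F_{k+1}$ is the union of uniquely determined $F_0,\dots,F_{n_{k+1}-1}\in\mathcal F_k$ forming a $\Delta$-system with root $R(F)$, $|R(F)|=r_{k+1}$, $R(F)<F_0\setminus R(F)<\dots<F_{n_{k+1}-1}\setminus R(F)$. For a construction scheme $\mathcal F$ over $\omega_1$, $l\ge1$, $F\in\mathcal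 F_l$ and finite $\mathcal C\subseteq[\omega_1]^{<\omega}$: $F$ captures $\mathcal C$ if $|\mathcal C|\le n_l$ and $\mathcal C$ can be enumerated as $\{c_i\}_{i<|\mathcal C|}$ with $c_i\subseteq F_i$, $c_i\setminus R(F)\neq\emptyset$ and $\phi_i[c_0]=c_i$ where $\phi_i:F_0\to F_i$ is the increasing bijection. $\mathcal F$ is $n$-capturing if for every uncountable $S\subseteq[\omega_1]^{<\omega}$ and every $k\in\omega$ there are $\mathcal C\in[S]^n$, $l>k$ and $F\in\mathcal F_l$ capturing $\mathcal C$. $CA_n$ is the statement: for every type $\tau$ with $n\le n_k$ for all $k\ge1$ there is an $n$-capturing construction scheme over $\omega_1$ of type $\tau$. *)

(* Defs.v *)
(* Sets are predicates W -> Prop; families are (W -> Prop) -> Prop.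
   omega_1 is represented by an abstract strict well-order (W, lt) that is
   uncountable and all of whose proper initial segments are countable. *)
From Stdlib Require Import List Arith.
Import ListNotations.
Set Implicit Arguments.

Section Defs.
Variable W : Type.
Variable lt : W -> W -> Prop.

Definition is_omega1 : Prop :=
  (forall x, ~ lt x x) /\
  (forall x y z, lt x y -> lt y z -> lt x z) /\
  (forall x y, x = y \/ lt x y \/ lt y x) /\
  well_founded lt /\
  ~ (exists f : W -> nat, forall x y, f x = f y -> x = y) /\
  (forall a, exists f : W -> nat, forall x y, lt x a -> lt y a -> f x = f y -> x = y).

Definition subset (A B : W -> Prop) := forall x, A x -> B x.
Definition seteq (A B : W -> Prop) := forall x, A x <-> B x.
Definition psubset (A B : W -> Prop) := subset A B /\ exists x, B x /\ ~ A x.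
Definition inter (A B : W -> Prop) : W -> Prop := fun x => A x /\ B x.
Definition diff (A B : W -> Prop) : W -> Prop := fun x => A x /\ ~ B x.

Definition finite (A : W -> Prop) := exists l : list W, forall x, A x <-> In x l.
Definition card_eq (A : W -> Prop) (p : nat) :=
  exists l : list W, NoDup l /\ length l = p /\ forall x, A x <-> In x l.

Definition set_lt (a b : W -> Prop) := forall x y, a x -> b y -> lt x y.
Definition init_seg (A B : W -> Prop) :=
  subset A B /\ forall x y, B x -> A y -> lt x y -> A x.

Definition countable_fam (S : (W -> Prop) -> Prop) :=
  exists f : (W -> Prop) -> nat, forall A B, S A -> S B -> f A = f B -> A = B.

Definition fam_enum (C : (W -> Prop) -> Prop) (N : nat) (c : nat -> W -> Prop) :=
  (forall i j, i < N -> j < N -> c i = c j -> i = j) /\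
  (forall i, i < N -> C (c i)) /\
  (forall A, C A -> exists i, i < N /\ A = c i).
Definition fam_card (C : (W -> Prop) -> Prop) (N : nat) := exists c, fam_enum C N c.

Definition rank_ge (F : (W -> Prop) -> Prop) (A : W -> Prop) (k : nat) :=
  exists c : nat -> W -> Prop,
    (forall i, i < k -> F (c i)) /\
    (forall i, i + 1 < k -> psubset (c i) (c (i + 1))) /\
    (0 < k -> psubset (c (k - 1)) A).
Definition level (F : (W -> Prop) -> Prop) (k : nat) (A : W -> Prop) :=
  F A /\ rank_ge F A k /\ ~ rank_ge F A (k + 1).

(* a type tau = {(m_k, n_{k+1}, r_{k+1})}_k, encoded by three sequences
   m, n, r : nat -> nat (the values n 0 and r 0 are irrelevant). *)
Definition is_type (m n r : nat -> nat) :=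
  m 0 = 1 /\
  (forall k, 1 <= k -> 2 <= n k) /\
  (forall j N, exists k, N < k /\ r k = j) /\
  (forall k, r (k + 1) < m k) /\
  (forall k, m (k + 1) = r (k + 1) + (m k - r (k + 1)) * n (k + 1)).

Definition is_decomp (m n r : nat -> nat) (F : (W -> Prop) -> Prop) (k : nat)
    (Fa : W -> Prop) (G : nat -> W -> Prop) (R : W -> Prop) :=
  (forall i, i < n (k + 1) -> level F k (G i)) /\
  seteq Fa (fun x => exists i, i < n (k + 1) /\ G i x) /\
  (forall i j, i < n (k + 1) -> j < n (k + 1) -> i <> j -> seteq (inter (G i) (G j)) R) /\
  card_eq R (r (k + 1)) /\
  set_lt R (diff (G 0) R) /\
  (forall i, i + 1 < n (k + 1) -> set_lt (diff (G i) R) (diff (G (i + 1)) R)).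

Definition construction_scheme (m n r : nat -> nat) (F : (W -> Prop) -> Prop) :=
  (forall A, F A -> finite A) /\
  (forall A, finite A -> exists B, F B /\ subset A B) /\
  (forall k A, level F k A -> card_eq A (m k)) /\
  (forall k E G, level F k E -> level F k G ->
      init_seg (inter E G) E /\ init_seg (inter E G) G) /\
  (forall k Fa, level F (k + 1) Fa ->
     exists G R, is_decomp m n r F k Fa G R /\
       forall G' R', is_decomp m n r F k Fa G' R' ->
         forall i, i < n (k + 1) -> seteq (G i) (G' i)).

(* same_pos A B x y : y is the image of x under the increasing bijection A -> B *)
Definition same_pos (A B : W -> Prop) (x y : W) :=
  A x /\ B y /\ exists p, card_eq (fun z => A z /\ lt z x) p /\
                          card_eq (fun z => B z /\ lt z y) p.

Definition captures (m n r : nat -> nat) (F : (W -> Prop) -> Prop) (l : nat)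
    (Fa : W -> Prop) (C : (W -> Prop) -> Prop) :=
  1 <= l /\ level F l Fa /\
  exists G R, is_decomp m n r F (l - 1) Fa G R /\
  exists N c, fam_enum C N c /\ N <= n l /\
    forall i, i < N ->
      subset (c i) (G i) /\
      (exists x, c i x /\ ~ R x) /\
      seteq (c i) (fun y => exists x, c 0 x /\ same_pos (G 0) (G i) x y).

Definition n_capturing (k0 : nat) (m n r : nat -> nat) (F : (W -> Prop) -> Prop) :=
  forall S : (W -> Prop) -> Prop,
    (forall A, S A -> finite A) -> ~ countable_fam S ->
    forall k, exists C l Fa,
      (forall A, C A -> S A) /\ fam_card C k0 /\ k < l /\ level F l Fa /\
      captures m n r F l Fa C.

Definition CA (k0 : nat) :=
  forall m n r, is_type m n r -> (forall k, 1 <= k -> k0 <= n k) ->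
    exists F, construction_scheme m n r F /\ n_capturing k0 m n r F.

End Defs.

(* Main.v *)
Require Import Defs.
From Stdlib Require Import List Arith.
From Stdlib Require Import Lia Classical ClassicalEpsilon FunctionalExtensionality PropExtensionality Cantor.
Import ListNotations.

Definition deq {W : Type} (x y : W) : {x = y} + {x <> y} := excluded_middle_informative _.
Definition decb (P : Prop) : bool := if excluded_middle_informative P then true else false.
Lemma decb_true (P : Prop) : decb P = true <-> P.
Proof. unfold decb; destruct (excluded_middle_informative P); split; congruence || tauto. Qed.

Lemma card_unique {W} (A : W -> Prop) p q : card_eq A p -> card_eq A q -> p = q.
Proof.
  intros [l1 [N1 [L1 H1]]] [l2 [N2 [L2 H2]]].
  assert (length l1 <= length l2) by (apply NoDup_incl_length; auto; intros x Hx; apply H2, H1, Hx).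
  assert (length l2 <= length l1) by (apply NoDup_incl_length; auto; intros x Hx; apply H1, H2, Hx).
  lia.
Qed.

Lemma card_seteq {W} (A B : W -> Prop) p : (forall x, A x <-> B x) -> card_eq A p -> card_eq B p.
Proof. intros E [l [N [L H]]]; exists l; repeat split; auto; intros Hx; [apply H, E| apply E, H]; auto. Qed.

Lemma finite_card {W} (A : W -> Prop) : finite A -> exists p, card_eq A p.
Proof.
  intros [l H]. exists (length (nodup deq l)), (nodup deq l). repeat split.
  apply NoDup_nodup. intro Hx; apply nodup_In, H, Hx. intro Hx; apply H, (nodup_In deq), Hx.
Qed.

Lemma finite_sub {W} (A : W -> Prop) (P : W -> Prop) : finite A -> finite (fun z => A z /\ P z).
Proof.
  intros [l H]. exists (filter (fun z => decb (P z)) l). intro x. rewrite filter_In, decb_true, <- H. tauto.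
Qed.

Lemma card_finite {W} (A : W -> Prop) p : card_eq A p -> finite A.
Proof. intros [l [_ [_ H]]]; exists l; auto. Qed.

Lemma NoDup_map_in {A B} (f : A -> B) (l : list A) :
  NoDup l -> (forall a b, In a l -> In b l -> f a = f b -> a = b) -> NoDup (map f l).
Proof.
  induction l as [|a l IH]; simpl; intros N Hi. constructor.
  inversion N; subst. constructor.
  - intro Hm. apply in_map_iff in Hm. destruct Hm as [b [E Hb]].
    assert (b = a) by (apply Hi; auto). subst; contradiction.
  - apply IH; auto.
Qed.

Lemma pigeon {W} (A B : W -> Prop) (f : W -> W) p q :
  card_eq A p -> card_eq B q -> (forall a, A a -> B (f a)) ->
  (forall a b, A a -> A b -> f a = f b -> a = b) -> p <= q.
Proof.
  intros [l1 [N1 [L1 H1]]] [l2 [N2 [L2 H2]]] HAB Hinj.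
  subst. rewrite <- (length_map f).
  apply NoDup_incl_length.
  - apply NoDup_map_in; auto. intros a b Ha Hb; apply Hinj; apply H1; auto.
  - intros y Hy. apply in_map_iff in Hy. destruct Hy as [x [E Hx]]. subst. apply H2, HAB, H1, Hx.
Qed.

Lemma card_le {W} (A B : W -> Prop) p q : card_eq A p -> card_eq B q -> (forall x, A x -> B x) -> p <= q.
Proof. intros HA HB HS. apply (pigeon A B (fun x => x) p q HA HB); auto. Qed.

Lemma card_strict {W} (A B : W -> Prop) p q : card_eq A p -> card_eq B q -> (forall x, A x -> B x) ->
  (exists z, B z /\ ~ A z) -> p < q.
Proof.
  intros HA HB HS [z [Bz Az]].
  destruct HA as [l1 [N1 [L1 H1]]].
  assert (card_eq (fun x => A x \/ x = z) (S p)).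
  { exists (z :: l1). repeat split. constructor; auto. intro Hi; apply Az, H1, Hi. simpl; lia.
    intros [Hx|Hx]; simpl; [right; apply H1, Hx | left; auto].
    simpl; intros [Hx|Hx]; [right; auto | left; apply H1, Hx]. }
  assert (S p <= q) by (apply (card_le _ _ _ _ H HB); intros x [Hx|Hx]; subst; auto). lia.
Qed.

Lemma card_exists_sub {W} (A : W -> Prop) p (P : W -> Prop) : card_eq A p -> exists q, card_eq (fun z => A z /\ P z) q.
Proof. intro H; apply finite_card, finite_sub, (card_finite _ _ H). Qed.


Lemma om_irr {W} {lt : W -> W -> Prop} : is_omega1 lt -> forall x, ~ lt x x.
Proof. intros H; apply H. Qed.
Lemma om_tr {W} {lt : W -> W -> Prop} : is_omega1 lt -> forall x y z, lt x y -> lt y z -> lt x z.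
Proof. intros H; apply H. Qed.
Lemma om_tot {W} {lt : W -> W -> Prop} : is_omega1 lt -> forall x y, x = y \/ lt x y \/ lt y x.
Proof. intros H; apply H. Qed.
Lemma om_asym {W} {lt : W -> W -> Prop} : is_omega1 lt -> forall x y, lt x y -> ~ lt y x.
Proof. intros H x y H1 H2. apply (om_irr H x), (om_tr H _ _ _ H1 H2). Qed.

Lemma pos_mono {W} {lt : W -> W -> Prop} (Hw : is_omega1 lt) (A : W -> Prop) x y p q :
  A x -> lt x y -> card_eq (fun z => A z /\ lt z x) p -> card_eq (fun z => A z /\ lt z y) q -> p < q.
Proof.
  intros Ax Hxy Hp Hq. apply (card_strict _ _ _ _ Hp Hq).
  intros z [Az Hz]; split; auto; eapply om_tr; eauto.
  exists x; split; auto. intros [_ H]; eapply om_irr; eauto.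
Qed.

Lemma pos_inj {W} {lt : W -> W -> Prop} (Hw : is_omega1 lt) (A : W -> Prop) x y p :
  A x -> A y -> card_eq (fun z => A z /\ lt z x) p -> card_eq (fun z => A z /\ lt z y) p -> x = y.
Proof.
  intros Ax Ay Hx Hy. destruct (om_tot Hw x y) as [E|[L|L]]; auto.
  - pose proof (pos_mono Hw A x y p p Ax L Hx Hy); lia.
  - pose proof (pos_mono Hw A y x p p Ay L Hy Hx); lia.
Qed.

Definition two (k : nat) := 2.

Lemma CL {W} {lt : W -> W -> Prop} m r F : construction_scheme lt m two r F ->
  forall d k E F', level F k E -> level F (k + d) F' -> init_seg lt (inter E F') E.
Proof.
  intros [Hfin [Hcov [Hcard [Hcoh Hdec]]]]. induction d; intros k E F' HE HF'.
  - rewrite Nat.add_0_r in HF'. apply (Hcoh k E F' HE HF').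
  - replace (k + S d) with ((k + d) + 1) in HF' by lia.
    destruct (Hdec _ _ HF') as [G [R [[Hl [Hu _]] _]]].
    split. intros x [Ex _]; auto.
    intros x y Ex [Ey Fy] Hxy. apply Hu in Fy. destruct Fy as [i [Hi Gi]].
    destruct (IHd k E (G i) HE (Hl i Hi)) as [_ Hs].
    destruct (Hs x y Ex (conj Ey Gi) Hxy) as [_ Gx].
    split; auto. apply Hu. exists i; auto.
Qed.


Lemma dec_facts {W} {lt : W -> W -> Prop} {m r F k Fa G R} :
  is_decomp lt m two r F k Fa G R ->
  level F k (G 0) /\ level F k (G 1) /\ (forall x, Fa x <-> G 0 x \/ G 1 x) /\
  (forall x, G 0 x /\ G 1 x <-> R x) /\ set_lt lt R (diff (G 0) R) /\ set_lt lt (diff (G 0) R) (diff (G 1) R).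
Proof.
  intros [Hl [Hu [Hr [_ [H0 H1]]]]]. unfold two in *.
  split; [apply Hl; lia|]. split; [apply Hl; lia|].
  split. { intro x; rewrite (Hu x); split. intros [i [Hi Gi]]. destruct i as [|[|i]]; auto; lia.
           intros [G0|G1]; [exists 0|exists 1]; split; auto. }
  split. { intro x. apply (Hr 0 1); lia. }
  split; [exact H0|]. apply (H1 0); lia.
Qed.

Definition ConfigL {W} (lt : W -> W -> Prop) m r F (a b : W) (l : nat) (b' : W) :=
  exists Fa G R, 1 <= l /\ level F l Fa /\ is_decomp lt m two r F (l - 1) Fa G R /\
    G 0 a /\ ~ R a /\ G 1 b /\ ~ R b /\ G 0 b' /\ same_pos lt (G 0) (G 1) b' b.

Lemma cfg_lt {W} {lt : W -> W -> Prop} {m r F a b l b'} : ConfigL lt m r F a b l b' -> lt a b.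
Proof.
  intros [Fa [G [R [_ [_ [HD [Ga [Ra [Gb [Rb _]]]]]]]]]].
  destruct (dec_facts HD) as [_ [_ [_ [_ [_ H]]]]]. apply H; split; auto.
Qed.

Lemma cfg_level_le {W} {lt : W -> W -> Prop} {m r F} (HF : construction_scheme lt m two r F) {a b l b' k E} :
  ConfigL lt m r F a b l b' -> level F k E -> E a -> E b -> l <= k.
Proof.
  intros HC HE Ea Eb. pose proof (cfg_lt HC) as Hab.
  destruct HC as [Fa [G [R [Hl1 [HFa [HD [Ga [Ra [Gb [Rb _]]]]]]]]]].
  destruct (dec_facts HD) as [_ [HG1 [_ [Hroot _]]]].
  destruct (le_lt_dec l k) as [|Hlt]; auto. exfalso.
  replace (l - 1) with (k + (l - 1 - k)) in HG1 by lia.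
  destruct (CL m r F HF _ _ _ _ HE HG1) as [_ Hs].
  destruct (Hs a b Ea (conj Eb Gb) Hab) as [_ G1a].
  apply Ra, Hroot; auto.
Qed.

Lemma cfg_fa {W} {lt : W -> W -> Prop} {m r F a b l b'} : ConfigL lt m r F a b l b' ->
  exists Fa, level F l Fa /\ Fa a /\ Fa b.
Proof.
  intros [Fa [G [R [Hl1 [HFa [HD [Ga [Ra [Gb [Rb _]]]]]]]]]].
  destruct (dec_facts HD) as [_ [_ [Hu _]]]. exists Fa; split; [exact HFa|]; split; apply Hu; auto.
Qed.

Lemma cfg_decr {W} {lt : W -> W -> Prop} {m r F} (HF : construction_scheme lt m two r F) {a b l b' l' b''} :
  ConfigL lt m r F a b l b' -> ConfigL lt m r F a b' l' b'' -> l' < l.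
Proof.
  intros HC HC'. destruct HC as [Fa [G [R [Hl1 [HFa [HD [Ga [Ra [Gb [Rb [Gb' _]]]]]]]]]]].
  destruct (dec_facts HD) as [HG0 _].
  pose proof (cfg_level_le HF HC' HG0 Ga Gb'). lia.
Qed.

Lemma cfg_level_eq {W} {lt : W -> W -> Prop} {m r F} (HF : construction_scheme lt m two r F) {a b l b1 l2 b2} :
  ConfigL lt m r F a b l b1 -> ConfigL lt m r F a b l2 b2 -> l = l2.
Proof.
  intros H1 H2. destruct (cfg_fa H1) as [E1 [HE1 [Ea1 Eb1]]]. destruct (cfg_fa H2) as [E2 [HE2 [Ea2 Eb2]]].
  pose proof (cfg_level_le HF H1 HE2 Ea2 Eb2). pose proof (cfg_level_le HF H2 HE1 Ea1 Eb1). lia.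
Qed.

Lemma dec_order {W} {lt : W -> W -> Prop} (Hw : is_omega1 lt) {m r F k Fa G R} a :
  is_decomp lt m two r F k Fa G R -> G 0 a -> ~ R a ->
  (forall z w, G 0 z -> G 1 w -> ~ R w -> lt z w) /\
  (forall x y, Fa x -> G 0 y -> lt x y -> G 0 x).
Proof.
  intros HD Ga Ra. destruct (dec_facts HD) as [_ [_ [Hu [Hroot [H0 H01]]]]].
  assert (A1 : forall z w, G 0 z -> G 1 w -> ~ R w -> lt z w).
  { intros z w Gz Gw Rw. destruct (classic (R z)) as [Rz|Rz].
    - apply (om_tr Hw _ a). apply H0; auto; split; auto. apply H01; split; auto.
    - apply H01; split; auto. }
  split; auto.
  intros x y Fx Gy Hxy. apply Hu in Fx. destruct Fx as [|G1x]; auto.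
  destruct (classic (G 0 x)) as [|G0x]; auto. exfalso.
  assert (~ R x) by (intro Rx; apply G0x, Hroot, Rx).
  apply (om_asym Hw _ _ Hxy). apply A1; auto.
Qed.

Lemma init_eq {W} {lt : W -> W -> Prop} (Hw : is_omega1 lt) (A B Y1 Y2 : W -> Prop) p :
  card_eq A p -> card_eq B p ->
  (forall x, A x -> Y1 x /\ Y2 x) -> (forall x, B x -> Y1 x /\ Y2 x) ->
  (forall x y, Y1 x -> A y -> lt x y -> A x) -> (forall x y, Y2 x -> B y -> lt x y -> B x) ->
  forall x, A x -> B x.
Proof.
  intros HA HB SA SB CA CB x Ax. apply NNPP; intro Bx.
  assert (p < p); [|lia].
  apply (card_strict B A p p HB HA); [|exists x; auto].
  intros y By. destruct (om_tot Hw x y) as [E|[L|L]].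
  - subst; contradiction.
  - exfalso; apply Bx. apply (CB x y); auto. apply SA; auto.
  - apply (CA y x); auto. apply SB; auto.
Qed.

Lemma cfg_copy_eq {W} {lt : W -> W -> Prop} (Hw : is_omega1 lt) {m r F} (HF : construction_scheme lt m two r F) {a b l b1 b2} :
  ConfigL lt m r F a b l b1 -> ConfigL lt m r F a b l b2 -> b1 = b2.
Proof.
  intros H1 H2.
  destruct H1 as [Fa [G [R [Hl1 [HFa [HD [Ga [Ra [Gb [Rb [Gb1 Hs1]]]]]]]]]]].
  destruct H2 as [Fa2 [G2 [R2 [_ [HFa2 [HD2 [G2a [R2a [G2b [R2b [G2b2 Hs2]]]]]]]]]]].
  destruct HF as [Hfin [Hcov [Hcard [Hcoh Hdec]]]].
  destruct (dec_facts HD) as [L0 [L1 [Hu [Hroot [H0 H01]]]]].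
  destruct (dec_facts HD2) as [L20 [L21 [Hu2 [Hroot2 [H20 H201]]]]].
  destruct (dec_order Hw a HD Ga Ra) as [A1 C1].
  destruct (dec_order Hw a HD2 G2a R2a) as [A2 C2].
  destruct (Hcoh _ _ _ HFa HFa2) as [[_ I1] [_ I2]].
  assert (Fb : Fa b) by (apply Hu; auto). assert (F2b : Fa2 b) by (apply Hu2; auto).
  assert (S1 : forall x, G 0 x -> Fa x /\ Fa2 x).
  { intros x Gx. assert (Fx : Fa x) by (apply Hu; auto). split; auto.
    apply (I1 x b Fx (conj Fb F2b)). apply A1; auto. }
  assert (S2 : forall x, G2 0 x -> Fa x /\ Fa2 x).
  { intros x Gx. assert (Fx : Fa2 x) by (apply Hu2; auto). split; auto.
    apply (I2 x b Fx (conj Fb F2b)). apply A2; auto. }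
  pose proof (Hcard _ _ L0) as K0. pose proof (Hcard _ _ L20) as K20.
  assert (E0 : forall x, G 0 x <-> G2 0 x).
  { intro x; split.
    - apply (init_eq Hw (G 0) (G2 0) Fa Fa2 (m (l-1))); auto.
    - apply (init_eq Hw (G2 0) (G 0) Fa2 Fa (m (l-1))); auto.
      intros z Hz; destruct (S2 z Hz); auto. intros z Hz; destruct (S1 z Hz); auto. }
  destruct (Hcoh _ _ _ L1 L21) as [[_ J1] [_ J2]].
  assert (E1 : forall z, (G 1 z /\ lt z b) <-> (G2 1 z /\ lt z b)).
  { intro z; split; intros [Gz Lz]; split; auto.
    apply (J1 z b Gz (conj Gb G2b) Lz). apply (J2 z b Gz (conj Gb G2b) Lz). }
  destruct Hs1 as [_ [_ [p1 [P1a P1b]]]]. destruct Hs2 as [_ [_ [p2 [P2a P2b]]]].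
  assert (p1 = p2) by (apply (card_unique _ _ _ (card_seteq _ _ _ E1 P1b) P2b)). subst p2.
  assert (Q : card_eq (fun z => G 0 z /\ lt z b2) p1).
  { apply (card_seteq (fun z => G2 0 z /\ lt z b2)); auto. intro z; rewrite (E0 z); tauto. }
  apply (pos_inj Hw (G 0) b1 b2 p1); auto. apply E0; auto.
Qed.

Definition Cfg {W} (lt : W -> W -> Prop) m r F a b b' := exists l, ConfigL lt m r F a b l b'.

Definition choose_copy {W} (w : W) (lt : W -> W -> Prop) m r F a b :=
  epsilon (inhabits w) (fun b' => Cfg lt m r F a b b' /\ lt a b').

Fixpoint D {W} (w : W) (lt : W -> W -> Prop) m r F (t : nat) (a b : W) : nat :=
  match t with
  | 0 => 0
  | S t => if excluded_middle_informative (exists b', Cfg lt m r F a b b' /\ lt a b')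
           then S (D w lt m r F t a (choose_copy w lt m r F a b)) else 0
  end.

Definition lev {W} (lt : W -> W -> Prop) m r F (a b : W) :=
  epsilon (inhabits 0) (fun l => exists b', ConfigL lt m r F a b l b').

Definition ocol {W} (w : W) (lt : W -> W -> Prop) m r F (a b : W) :=
  D w lt m r F (lev lt m r F a b) a b.

Lemma D_stable {W} (w : W) {lt : W -> W -> Prop} (Hw : is_omega1 lt) {m r F} (HF : construction_scheme lt m two r F) :
  forall k a b t t', (forall l b', ConfigL lt m r F a b l b' -> l <= k) -> k <= t -> k <= t' ->
  D w lt m r F t a b = D w lt m r F t' a b.
Proof.
  induction k; intros a b t t' Hk Ht Ht'.
  - destruct t, t'; simpl; auto;
    destruct (excluded_middle_informative _) as [[b' [[l Hc] _]]|]; auto;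
    pose proof (Hk _ _ Hc); destruct Hc as [? [? [? [? _]]]]; lia.
  - destruct (excluded_middle_informative (exists b', Cfg lt m r F a b b' /\ lt a b')) as [Ex|NEx].
    + destruct t as [|s]; destruct t' as [|s']; [lia|lia|lia|]. simpl.
      destruct (excluded_middle_informative _) as [_|]; [|contradiction].
      f_equal. pose proof (epsilon_spec (inhabits w) _ Ex) as [[lc Hc] Hac].
      fold (choose_copy w lt m r F a b) in Hc, Hac.
      apply IHk; try lia.
      intros l' b'' Hc'. pose proof (cfg_decr HF Hc Hc'). pose proof (Hk _ _ Hc). lia.
    + destruct t, t'; simpl; auto; destruct (excluded_middle_informative _); auto; contradiction.
Qed.

Lemma lev_eq {W} {lt : W -> W -> Prop} {m r F} (HF : construction_scheme lt m two r F) a b l b' :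
  ConfigL lt m r F a b l b' -> lev lt m r F a b = l.
Proof.
  intro Hc. assert (Ex : exists l b', ConfigL lt m r F a b l b') by eauto.
  pose proof (epsilon_spec (inhabits 0) _ Ex) as [b'' Hc'].
  fold (lev lt m r F a b) in Hc'. apply (cfg_level_eq HF Hc' Hc).
Qed.

Lemma o_step {W} (w : W) {lt : W -> W -> Prop} (Hw : is_omega1 lt) {m r F} (HF : construction_scheme lt m two r F) a b l b' :
  ConfigL lt m r F a b l b' -> lt a b' -> ocol w lt m r F a b = S (ocol w lt m r F a b').
Proof.
  intros Hc Hab'. unfold ocol at 1. rewrite (lev_eq HF _ _ _ _ Hc).
  destruct l as [|s]. { destruct Hc as [? [? [? [? _]]]]; lia. }
  simpl. destruct (excluded_middle_informative _) as [Ex|NEx]; [|exfalso; apply NEx; exists b'; split; auto; exists (S s); auto].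
  pose proof (epsilon_spec (inhabits w) _ Ex) as [[lc Hcc] Hac].
  fold (choose_copy w lt m r F a b) in Hcc, Hac.
  pose proof (cfg_level_eq HF Hcc Hc); subst lc.
  rewrite (cfg_copy_eq Hw HF Hcc Hc). f_equal.
  unfold ocol. destruct (classic (exists l' b'', ConfigL lt m r F a b' l' b'')) as [[l' [b'' Hc']]|NE].
  - rewrite (lev_eq HF _ _ _ _ Hc'). pose proof (cfg_decr HF Hc Hc').
    apply (D_stable w Hw HF l'); try lia.
    intros l2 b2 H2. pose proof (cfg_level_eq HF H2 Hc'). lia.
  - apply (D_stable w Hw HF 0); try lia. intros l2 b2 H2. exfalso; apply NE; eauto.
Qed.

Lemma o_zero {W} (w : W) {lt : W -> W -> Prop} (Hw : is_omega1 lt) {m r F} (HF : construction_scheme lt m two r F) a b l b' :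
  ConfigL lt m r F a b l b' -> ~ lt a b' -> ocol w lt m r F a b = 0.
Proof.
  intros Hc Hab'. unfold ocol. rewrite (lev_eq HF _ _ _ _ Hc).
  destruct l as [|s]; simpl; auto.
  destruct (excluded_middle_informative _) as [[c [[lc Hcc] Hac]]|]; auto.
  exfalso. pose proof (cfg_level_eq HF Hcc Hc); subst lc.
  rewrite (cfg_copy_eq Hw HF Hcc Hc) in Hac. contradiction.
Qed.

Definition seginj {W} (lt : W -> W -> Prop) (z : W) : W -> nat :=
  epsilon (inhabits (fun _ => 0)) (fun f => forall x y, lt x z -> lt y z -> f x = f y -> x = y).

Definition lecode {W} (lt : W -> W -> Prop) (z x : W) : nat :=
  if excluded_middle_informative (x = z) then 0 else S (seginj lt z x).

Lemma lecode_inj {W} {lt : W -> W -> Prop} (Hw : is_omega1 lt) z x y :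
  ~ lt z x -> ~ lt z y -> lecode lt z x = lecode lt z y -> x = y.
Proof.
  intros Hx Hy. unfold lecode.
  assert (Hs : forall x y, lt x z -> lt y z -> seginj lt z x = seginj lt z y -> x = y).
  { unfold seginj. apply (epsilon_spec (inhabits (fun _ => 0)) (fun f => forall x y, lt x z -> lt y z -> f x = f y -> x = y)).
    destruct Hw as [_ [_ [_ [_ [_ H]]]]]. apply H. }
  destruct (excluded_middle_informative (x = z)), (excluded_middle_informative (y = z)); try congruence.
  intro E; injection E; intro E'. apply Hs; auto.
  - destruct (om_tot Hw x z) as [|[|]]; tauto.
  - destruct (om_tot Hw y z) as [|[|]]; tauto.
Qed.

Lemma cu {W} (S : (W -> Prop) -> Prop) (kappa : (W -> Prop) -> nat) :
  (forall j, countable_fam (fun a => S a /\ kappa a = j)) -> countable_fam S.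
Proof.
  intro H.
  set (h := fun j => epsilon (inhabits (fun _ : W -> Prop => 0))
     (fun f => forall A B, (S A /\ kappa A = j) -> (S B /\ kappa B = j) -> f A = f B -> A = B)).
  exists (fun a => to_nat (kappa a, h (kappa a) a)).
  intros A B SA SB E.
  assert (E2 : (kappa A, h (kappa A) A) = (kappa B, h (kappa B) B)).
  { rewrite <- (cancel_of_to (kappa A, _)), <- (cancel_of_to (kappa B, _)), E; auto. }
  injection E2; intros E3 E4. rewrite <- E4 in E3.
  apply (epsilon_spec (inhabits (fun _ : W -> Prop => 0)) _ (H (kappa A))) with (A := A) (B := B); auto.
Qed.

Lemma above {W} {lt : W -> W -> Prop} (Hw : is_omega1 lt) (A : (W -> Prop) -> Prop) :
  ~ countable_fam A -> (forall a b, A a -> A b -> a <> b -> forall x, ~ (a x /\ b x)) ->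
  forall xi, exists a, A a /\ forall z, a z -> lt xi z.
Proof.
  intros Hu Hd xi. apply NNPP; intro N. apply Hu.
  set (zz := fun a : W -> Prop => epsilon (inhabits xi) (fun z => a z /\ ~ lt xi z)).
  assert (Hz : forall a, A a -> a (zz a) /\ ~ lt xi (zz a)).
  { intros a Aa. apply (epsilon_spec (inhabits xi) (fun z => a z /\ ~ lt xi z)).
    apply NNPP; intro N2; apply N; exists a; split; auto. intros z az. apply NNPP; intro; apply N2; eauto. }
  exists (fun a => lecode lt xi (zz a)). intros a b Aa Ab E.
  destruct (Hz a Aa), (Hz b Ab).
  pose proof (lecode_inj Hw _ _ _ H0 H2 E) as E'.
  apply NNPP; intro Ne. apply (Hd a b Aa Ab Ne (zz a)). split; auto. rewrite E'; auto.
Qed.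

Lemma bound {W} (w : W) {lt : W -> W -> Prop} (Hw : is_omega1 lt) (S : (W -> Prop) -> Prop) :
  countable_fam S -> (forall c, S c -> finite c) -> exists xi, forall c, S c -> forall z, c z -> lt z xi.
Proof.
  intros [h Hh] Hf.
  set (cc := fun k => epsilon (inhabits (fun _ : W => False)) (fun c => S c /\ h c = k)).
  set (ls := fun k => epsilon (inhabits (@nil W)) (fun l => forall x, cc k x <-> In x l)).
  set (zf := fun p => nth (snd (of_nat p)) (ls (fst (of_nat p))) w).
  assert (Hall : forall c, S c -> forall z, c z -> exists p, zf p = z).
  { intros c Sc z cz.
    assert (Ecc : cc (h c) = c).
    { assert (Ex : exists c', S c' /\ h c' = h c) by eauto.
      destruct (epsilon_spec (inhabits (fun _ : W => False)) _ Ex) as [S1 E1]. apply Hh; auto. }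
    assert (Hl : forall x, cc (h c) x <-> In x (ls (h c))).
    { apply (epsilon_spec (inhabits (@nil W)) (fun l => forall x, cc (h c) x <-> In x l)).
      rewrite Ecc; apply Hf; auto. }
    assert (In z (ls (h c))) by (apply Hl; rewrite Ecc; auto).
    destruct (In_nth _ _ w H) as [i [_ Hi]].
    exists (to_nat (h c, i)). unfold zf. rewrite cancel_of_to. simpl. auto. }
  apply NNPP; intro N.
  assert (Hp : forall xi, exists p, ~ lt (zf p) xi).
  { intro xi. apply NNPP; intro N2; apply N; exists xi. intros c Sc z cz.
    destruct (Hall c Sc z cz) as [p Ep]. subst. apply NNPP; intro; apply N2; eauto. }
  destruct Hw as [Hirr [Htr [Htot [Hwf [Hunc Hseg]]]]] eqn:Hw'.
  apply Hunc.
  set (pp := fun xi => epsilon (inhabits 0) (fun p => ~ lt (zf p) xi)).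
  exists (fun xi => to_nat (pp xi, lecode lt (zf (pp xi)) xi)).
  intros x y E.
  assert (E2 : (pp x, lecode lt (zf (pp x)) x) = (pp y, lecode lt (zf (pp y)) y)).
  { rewrite <- (cancel_of_to (pp x, _)), <- (cancel_of_to (pp y, _)), E; auto. }
  injection E2; intros E3 E4. rewrite <- E4 in E3.
  apply (lecode_inj Hw (zf (pp x))); auto.
  - apply (epsilon_spec (inhabits 0) (fun p => ~ lt (zf p) x)); auto.
  - rewrite E4. apply (epsilon_spec (inhabits 0) (fun p => ~ lt (zf p) y)); auto.
Qed.


Lemma sp_func {W} {lt : W -> W -> Prop} (Hw : is_omega1 lt) (A B : W -> Prop) v u1 u2 :
  same_pos lt A B v u1 -> same_pos lt A B v u2 -> u1 = u2.
Proof.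
  intros [Av [Bu1 [p1 [H1 H1']]]] [_ [Bu2 [p2 [H2 H2']]]].
  pose proof (card_unique _ _ _ H1 H2); subst. apply (pos_inj Hw B u1 u2 p2); auto.
Qed.

Lemma sp_inj {W} {lt : W -> W -> Prop} (Hw : is_omega1 lt) (A B : W -> Prop) v u1 u2 :
  same_pos lt A B u1 v -> same_pos lt A B u2 v -> u1 = u2.
Proof.
  intros [Au1 [Bv [p1 [H1 H1']]]] [Au2 [_ [p2 [H2 H2']]]].
  pose proof (card_unique _ _ _ H1' H2'); subst. apply (pos_inj Hw A u1 u2 p2); auto.
Qed.

Lemma sp_mono {W} {lt : W -> W -> Prop} (Hw : is_omega1 lt) (A B : W -> Prop) u' u z w :
  same_pos lt A B u' u -> same_pos lt A B z w -> lt u w -> lt u' z.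
Proof.
  intros [Au' [Bu [p1 [H1 H1']]]] [Az [Bw [p2 [H2 H2']]]] Luw.
  pose proof (pos_mono Hw B u w p1 p2 Bu Luw H1' H2').
  destruct (om_tot Hw u' z) as [E|[L|L]]; auto.
  - subst. pose proof (card_unique _ _ _ H1 H2). lia.
  - pose proof (pos_mono Hw A z u' p2 p1 Az L H2 H1). lia.
Qed.

Definition preim {W} (w : W) (P : W -> W -> Prop) (c0 : W -> Prop) (u : W) :=
  epsilon (inhabits w) (fun u' => c0 u' /\ P u' u).

Lemma phi_a {W} {lt : W -> W -> Prop} (Hw : is_omega1 lt) (G0 G1 : W -> Prop) (x0 y0 x1 y1 : W -> Prop) p :
  (forall y, (x1 y \/ y1 y) <-> exists x, (x0 x \/ y0 x) /\ same_pos lt G0 G1 x y) ->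
  set_lt lt x0 y0 -> set_lt lt x1 y1 -> card_eq x0 p -> card_eq x1 p ->
  forall z w, x0 z -> same_pos lt G0 G1 z w -> x1 w.
Proof.
  intros Hc Hl0 Hl1 K0 K1 z w xz Hzw.
  assert (Cw : x1 w \/ y1 w) by (apply Hc; eauto).
  destruct Cw as [|Yw]; auto. exfalso.
  set (pre := preim z (same_pos lt G0 G1) (fun x => x0 x \/ y0 x)).
  assert (Hpre : forall u, x1 u -> (x0 (pre u) \/ y0 (pre u)) /\ same_pos lt G0 G1 (pre u) u).
  { intros u xu. apply (epsilon_spec (inhabits z) (fun u' => (x0 u' \/ y0 u') /\ same_pos lt G0 G1 u' u)).
    apply Hc; auto. }
  destruct (card_exists_sub x0 p (fun v => lt v z) K0) as [p' K'].
  assert (p' < p).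
  { apply (card_strict _ _ _ _ K' K0). intros v [? ?]; auto. exists z; split; auto. intros [_ L]; apply (om_irr Hw z L). }
  assert (p <= p'); [|lia].
  apply (pigeon x1 _ pre p p' K1 K').
  - intros u xu. destruct (Hpre u xu) as [[C|C] Hs].
    + split; auto. apply (sp_mono Hw G0 G1 _ u z w); auto.
    + exfalso. assert (lt (pre u) z) by (apply (sp_mono Hw G0 G1 _ u z w); auto).
      apply (om_asym Hw _ _ H0). apply Hl0; auto.
  - intros a b xa xb E. destruct (Hpre a xa) as [_ Ha]. destruct (Hpre b xb) as [_ Hb].
    rewrite E in Ha. apply (sp_func Hw G0 G1 (pre b)); auto.
Qed.

Lemma phi_b {W} {lt : W -> W -> Prop} (Hw : is_omega1 lt) (G0 G1 : W -> Prop) (x0 y0 x1 y1 : W -> Prop) q :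
  (forall y, (x1 y \/ y1 y) <-> exists x, (x0 x \/ y0 x) /\ same_pos lt G0 G1 x y) ->
  set_lt lt x0 y0 -> set_lt lt x1 y1 -> card_eq y0 q -> card_eq y1 q ->
  forall z w, y0 z -> same_pos lt G0 G1 z w -> y1 w.
Proof.
  intros Hc Hl0 Hl1 K0 K1 z w yz Hzw.
  assert (Cw : x1 w \/ y1 w) by (apply Hc; eauto).
  destruct Cw as [Xw|]; auto. exfalso.
  set (pre := preim z (same_pos lt G0 G1) (fun x => x0 x \/ y0 x)).
  assert (Hpre : forall u, y1 u -> (x0 (pre u) \/ y0 (pre u)) /\ same_pos lt G0 G1 (pre u) u).
  { intros u yu. apply (epsilon_spec (inhabits z) (fun u' => (x0 u' \/ y0 u') /\ same_pos lt G0 G1 u' u)).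
    apply Hc; auto. }
  destruct (card_exists_sub y0 q (fun v => lt z v) K0) as [q' K'].
  assert (q' < q).
  { apply (card_strict _ _ _ _ K' K0). intros v [? ?]; auto. exists z; split; auto. intros [_ L]; apply (om_irr Hw z L). }
  assert (q <= q'); [|lia].
  apply (pigeon y1 _ pre q q' K1 K').
  - intros u yu. destruct (Hpre u yu) as [[C|C] Hs].
    + exfalso. assert (lt z (pre u)) by (apply (sp_mono Hw G0 G1 z w _ u); auto).
      apply (om_asym Hw _ _ H0). apply Hl0; auto.
    + split; auto. apply (sp_mono Hw G0 G1 z w _ u); auto.
  - intros a b ya yb E. destruct (Hpre a ya) as [_ Ha]. destruct (Hpre b yb) as [_ Hb].
    rewrite E in Ha. apply (sp_func Hw G0 G1 (pre b)); auto.
Qed.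

Lemma root_sp {W} {lt : W -> W -> Prop} (Hw : is_omega1 lt) {m r F k Fa G R} a mk :
  is_decomp lt m two r F k Fa G R -> G 0 a -> ~ R a -> card_eq (G 0) mk ->
  forall z, R z -> same_pos lt (G 0) (G 1) z z.
Proof.
  intros HD Ga Ra K z Rz.
  destruct (dec_facts HD) as [_ [_ [Hu [Hroot [H0 H01]]]]].
  destruct (dec_order Hw a HD Ga Ra) as [A1 _].
  assert (G0z : G 0 z) by (apply Hroot; auto). assert (G1z : G 1 z) by (apply Hroot; auto).
  destruct (card_exists_sub _ _ (fun v => lt v z) K) as [p Kp].
  split; auto. split; auto. exists p; split; auto.
  revert Kp; apply card_seteq; intro v; split; intros [Gv Lv]; split; auto.
  - destruct (classic (R v)) as [Rv|Rv]. apply Hroot; auto.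
    exfalso. apply (om_asym Hw _ _ Lv). apply H0; auto. split; auto.
  - destruct (classic (R v)) as [Rv|Rv]. apply Hroot; auto.
    exfalso. apply (om_asym Hw _ _ Lv). apply A1; auto.
Qed.

Lemma core {W} {lt : W -> W -> Prop} (Hw : is_omega1 lt) {m r F} (HF : construction_scheme lt m two r F)
  (A : (W -> Prop) -> Prop) (Hd : forall a b, A a -> A b -> a <> b -> forall x, ~ (a x /\ b x))
  x0 y0 x1 y1 p q l Fa G R :
  A x0 -> A y0 -> A x1 -> A y1 -> x0 <> x1 -> y0 <> y1 ->
  set_lt lt x0 y0 -> set_lt lt x1 y1 -> card_eq x0 p -> card_eq x1 p -> card_eq y0 q -> card_eq y1 q ->
  level F l Fa -> is_decomp lt m two r F (l - 1) Fa G R ->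
  (forall z, x0 z \/ y0 z -> G 0 z) -> (forall z, x1 z \/ y1 z -> G 1 z) ->
  (exists z, (x0 z \/ y0 z) /\ ~ R z) ->
  (forall y, (x1 y \/ y1 y) <-> exists x, (x0 x \/ y0 x) /\ same_pos lt (G 0) (G 1) x y) ->
  (forall z, x0 z \/ y0 z -> ~ R z) /\ (forall z, x1 z \/ y1 z -> ~ R z) /\
  (forall b, y1 b -> exists b', y0 b' /\ same_pos lt (G 0) (G 1) b' b) /\
  (forall b, x1 b -> exists b', x0 b' /\ same_pos lt (G 0) (G 1) b' b).
Proof.
  intros Ax0 Ay0 Ax1 Ay1 Nx Ny L0 L1 Kx0 Kx1 Ky0 Ky1 HFa HD S0 S1 [a [ca Ra]] Hc.
  destruct HF as [Hfin [Hcov [Hcard [Hcoh Hdec]]]].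
  destruct (dec_facts HD) as [LG0 [LG1 [Hu [Hroot [H0 H01]]]]].
  pose proof (Hcard _ _ LG0) as KG0.
  assert (Ga : G 0 a) by auto.
  pose proof (root_sp Hw a _ HD Ga Ra KG0) as Hrs.
  pose proof (phi_a Hw (G 0) (G 1) x0 y0 x1 y1 p Hc L0 L1 Kx0 Kx1) as Pa.
  pose proof (phi_b Hw (G 0) (G 1) x0 y0 x1 y1 q Hc L0 L1 Ky0 Ky1) as Pb.
  assert (N0 : forall z, x0 z \/ y0 z -> ~ R z).
  { intros z [X|Y] Rz; pose proof (Hrs z Rz) as Hs.
    - apply (Hd x0 x1 Ax0 Ax1 Nx z); split; auto. apply (Pa z z); auto.
    - apply (Hd y0 y1 Ay0 Ay1 Ny z); split; auto. apply (Pb z z); auto. }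
  split; auto. split.
  { intros z cz Rz. apply Hc in cz. destruct cz as [z' [cz' Hs']].
    pose proof (sp_inj Hw _ _ _ _ _ Hs' (Hrs z Rz)). subst. apply (N0 z); auto. }
  split.
  - intros b yb. assert (Hb : exists x, (x0 x \/ y0 x) /\ same_pos lt (G 0) (G 1) x b) by (apply Hc; auto).
    destruct Hb as [b' [[X|Y] Hs]]; eauto.
    exfalso. pose proof (Pa _ _ X Hs). apply (om_irr Hw b). apply L1; auto.
  - intros b xb. assert (Hb : exists x, (x0 x \/ y0 x) /\ same_pos lt (G 0) (G 1) x b) by (apply Hc; auto).
    destruct Hb as [b' [[X|Y] Hs]]; eauto.
    exfalso. pose proof (Pb _ _ Y Hs). apply (om_irr Hw b). apply L1; auto.
Qed.

Lemma count_sub {W} (S T : (W -> Prop) -> Prop) : countable_fam S -> (forall a, T a -> S a) -> countable_fam T.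
Proof. intros [f Hf] H; exists f; intros; apply Hf; auto. Qed.

Lemma count_split {W} (S Q : (W -> Prop) -> Prop) :
  countable_fam (fun a => S a /\ Q a) -> countable_fam (fun a => S a /\ ~ Q a) -> countable_fam S.
Proof.
  intros H1 H2. apply (cu S (fun a => if excluded_middle_informative (Q a) then 0 else 1)).
  intros [|j].
  - apply (count_sub _ _ H1). intros a [Sa E]. destruct (excluded_middle_informative (Q a)); auto; discriminate.
  - apply (count_sub _ _ H2). intros a [Sa E]. destruct (excluded_middle_informative (Q a)); auto; discriminate.
Qed.

Lemma thin {W} (S : (W -> Prop) -> Prop) (kappa : (W -> Prop) -> nat) :
  ~ countable_fam S -> exists j, ~ countable_fam (fun a => S a /\ kappa a = j).
Proof.
  intro H. apply NNPP; intro N. apply H, (cu S kappa). intro j. apply NNPP; intro N2; apply N; eauto.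
Qed.

Lemma finite_union {W} (a b : W -> Prop) : finite a -> finite b -> finite (fun z => a z \/ b z).
Proof. intros [l1 H1] [l2 H2]; exists (l1 ++ l2); intro x; rewrite in_app_iff, <- H1, <- H2; tauto. Qed.

Lemma capture {W} (w : W) {lt : W -> W -> Prop} (Hw : is_omega1 lt) {m r F} (HF : construction_scheme lt m two r F)
  (Hcap : n_capturing lt 2 m two r F)
  (A : (W -> Prop) -> Prop) (P : (W -> Prop) -> (W -> Prop) -> Prop) :
  (forall a, A a -> finite a) -> (forall a, A a -> exists z, a z) ->
  (forall a b, A a -> A b -> a <> b -> forall x, ~ (a x /\ b x)) -> ~ countable_fam A ->
  (forall A', (forall a, A' a -> A a) -> ~ countable_fam A' -> exists x y, A' x /\ A' y /\ set_lt lt x y /\ P x y) ->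
  exists x0 y0 x1 y1 l Fa G R, A x0 /\ A y0 /\ A x1 /\ A y1 /\ P x0 y0 /\ P x1 y1 /\
    set_lt lt x0 y0 /\ set_lt lt x1 y1 /\ 1 <= l /\ level F l Fa /\ is_decomp lt m two r F (l - 1) Fa G R /\
    (forall z, x0 z \/ y0 z -> G 0 z /\ ~ R z) /\ (forall z, x1 z \/ y1 z -> G 1 z /\ ~ R z) /\
    (forall b, y1 b -> exists b', y0 b' /\ same_pos lt (G 0) (G 1) b' b) /\
    (forall b, x1 b -> exists b', x0 b' /\ same_pos lt (G 0) (G 1) b' b).
Proof.
  intros Hfin Hne Hd Hu HP.
  set (X := fun x => A x /\ exists y, A y /\ set_lt lt x y /\ P x y).
  assert (HX : ~ countable_fam X).
  { intro cX. apply Hu. apply (count_split A X).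
    - apply (count_sub _ _ cX). intros a [_ ?]; auto.
    - apply NNPP; intro N. destruct (HP _ (fun a H => proj1 H) N) as [x [y [[Ax NX] [[Ay _] [Lxy Pxy]]]]].
      apply NX. split; eauto. }
  set (f := fun x => epsilon (inhabits (fun _ : W => False)) (fun y => A y /\ set_lt lt x y /\ P x y)).
  assert (Hf : forall x, X x -> A (f x) /\ set_lt lt x (f x) /\ P x (f x)).
  { intros x [_ Ex]. apply (epsilon_spec (inhabits (fun _ : W => False)) (fun y => A y /\ set_lt lt x y /\ P x y) Ex). }
  set (cd := fun a : W -> Prop => epsilon (inhabits 0) (card_eq a)).
  assert (Hcd : forall a, finite a -> card_eq a (cd a)).
  { intros a Fa. apply (epsilon_spec (inhabits 0) (card_eq a)). apply finite_card; auto. }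
  destruct (thin X cd HX) as [p HX1].
  destruct (thin _ (fun x => cd (f x)) HX1) as [q HX2].
  set (X2 := fun x => (X x /\ cd x = p) /\ cd (f x) = q) in HX2.
  set (g := fun y => epsilon (inhabits (fun _ : W => False)) (fun x => X2 x /\ f x = y)).
  assert (Hg : forall y, (exists x, X2 x /\ f x = y) -> X2 (g y) /\ f (g y) = y).
  { intros y Ey. apply (epsilon_spec (inhabits (fun _ : W => False)) (fun x => X2 x /\ f x = y) Ey). }
  set (S := fun c => exists y, (exists x, X2 x /\ f x = y) /\ c = (fun z => g y z \/ y z)).
  assert (HX2A : forall x, X2 x -> A x) by (intros x [[[Ax _] _] _]; auto).
  assert (HSf : forall c, S c -> finite c).
  { intros c [y [Ey E]]. subst c. destruct (Hg y Ey) as [Xg Eg].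
    pose proof (Hf _ (proj1 (proj1 Xg))) as [Ay _]. rewrite Eg in Ay.
    apply finite_union; apply Hfin; auto. }
  assert (HSu : ~ countable_fam S).
  { intro cS. destruct (bound w Hw S cS HSf) as [xi Hxi].
    destruct (above Hw X2 HX2 (fun a b Ha Hb => Hd a b (HX2A a Ha) (HX2A b Hb)) xi) as [x [X2x Hx]].
    destruct (Hf x (proj1 (proj1 X2x))) as [Ay [Lxy _]].
    destruct (Hne _ Ay) as [z yz]. destruct (Hne _ (HX2A _ X2x)) as [z' xz'].
    assert (lt z xi).
    { apply (Hxi (fun z => g (f x) z \/ f x z)); auto. exists (f x); split; eauto. }
    apply (om_irr Hw xi). apply (om_tr Hw _ z'); auto. apply (om_tr Hw _ z); auto. }
  destruct (Hcap S HSf HSu 0) as [C [l [Fa [CS [[d Hdd] [Hl [HFa Hcapt]]]]]]].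
  destruct Hcapt as [Hl1 [_ [G [R [HD [N [c [[cinj [cC csurj]] [HN Hi]]]]]]]]].
  destruct Hdd as [dinj [dC dsurj]].
  destruct (csurj _ (dC 0 ltac:(lia))) as [i0 [Hi0 E0]].
  destruct (csurj _ (dC 1 ltac:(lia))) as [i1 [Hi1 E1]].
  assert (i0 <> i1) by (intro; subst; pose proof (dinj 0 1 ltac:(lia) ltac:(lia) (eq_trans E0 (eq_sym E1))); lia).
  assert (N0 : 0 < N) by lia. assert (N1 : 1 < N) by lia.
  assert (Ncc : c 0 <> c 1) by (intro E; pose proof (cinj 0 1 N0 N1 E); lia).
  destruct (CS _ (cC 0 N0)) as [y0 [Ey0 Ec0]]. destruct (CS _ (cC 1 N1)) as [y1 [Ey1 Ec1]].
  destruct (Hi 0 N0) as [Sub0 [Ex0 _]]. destruct (Hi 1 N1) as [Sub1 [_ Hc1]].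
  rewrite Ec0 in Sub0, Ex0, Hc1. rewrite Ec1 in Sub1, Hc1. rewrite Ec0, Ec1 in Ncc.
  destruct (Hg y0 Ey0) as [[[X0 cx0] cy0] fx0]. destruct (Hg y1 Ey1) as [[[X1 cx1] cy1] fx1].
  destruct (Hf _ X0) as [Ay0 [L0 P0]]. destruct (Hf _ X1) as [Ay1 [L1 P1]].
  rewrite fx0 in Ay0, L0, P0, cy0. rewrite fx1 in Ay1, L1, P1, cy1.
  assert (Ny : y0 <> y1) by (intro E; rewrite E in Ncc; apply Ncc; auto).
  assert (Nx : g y0 <> g y1) by (intro E; apply Ny; rewrite <- fx0, <- fx1, E; auto).
  assert (Ax0 : A (g y0)) by (destruct X0; auto). assert (Ax1 : A (g y1)) by (destruct X1; auto).
  assert (Kx0 : card_eq (g y0) p) by (rewrite <- cx0; apply Hcd, Hfin; auto).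
  assert (Kx1 : card_eq (g y1) p) by (rewrite <- cx1; apply Hcd, Hfin; auto).
  assert (Ky0 : card_eq y0 q) by (rewrite <- cy0; apply Hcd, Hfin; auto).
  assert (Ky1 : card_eq y1 q) by (rewrite <- cy1; apply Hcd, Hfin; auto).
  destruct (core Hw HF A Hd (g y0) y0 (g y1) y1 p q l Fa G R Ax0 Ay0 Ax1 Ay1 Nx Ny L0 L1 Kx0 Kx1 Ky0 Ky1 HFa HD Sub0 Sub1 Ex0 Hc1)
    as [R0 [R1 [Pre1 Pre2]]].
  exists (g y0), y0, (g y1), y1, l, Fa, G, R.
  do 11 (split; [solve [auto]|]).
  split; [intros z Hz; split; [apply Sub0 | apply R0]; auto|].
  split; [intros z Hz; split; [apply Sub1 | apply R1]; auto|].
  auto.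
Qed.

Lemma pair_exists {W} (w : W) {lt : W -> W -> Prop} (Hw : is_omega1 lt) (A : (W -> Prop) -> Prop) :
  (forall a, A a -> finite a) ->
  (forall a b, A a -> A b -> a <> b -> forall x, ~ (a x /\ b x)) -> ~ countable_fam A ->
  exists x y, A x /\ A y /\ set_lt lt x y.
Proof.
  intros Hfin Hd Hu.
  destruct (above Hw A Hu Hd w) as [x [Ax _]].
  destruct (bound w Hw (fun c => c = x)) as [xi Hxi].
  { exists (fun _ => 0). intros a b Ea Eb _; subst; auto. }
  { intros c E; subst; auto. }
  destruct (above Hw A Hu Hd xi) as [y [Ay Hy]].
  exists x, y. split; auto. split; auto. intros u v xu yv.
  apply (om_tr Hw _ xi); auto. apply (Hxi x); auto.
Qed.

Lemma good {W} (w : W) {lt : W -> W -> Prop} (Hw : is_omega1 lt) {m r F} (HF : construction_scheme lt m two r F)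
  (Hcap : n_capturing lt 2 m two r F) (n : nat) :
  forall A : (W -> Prop) -> Prop,
    (forall a, A a -> finite a) ->
    (forall a b, A a -> A b -> a <> b -> forall x, ~ (a x /\ b x)) ->
    ~ countable_fam A ->
    exists a b, A a /\ A b /\ set_lt lt a b /\ (forall x y, a x -> b y -> ocol w lt m r F x y = n).
Proof.
  induction n; intros A Hfin Hd Hu.
  - destruct (classic (exists a, A a /\ forall z, ~ a z)) as [[a [Aa Ea]]|Ne].
    { exists a, a. split; auto. split; auto. split; intros x y ax; exfalso; apply (Ea x ax). }
    assert (Hne : forall a, A a -> exists z, a z).
    { intros a Aa. apply NNPP; intro N; apply Ne; exists a; split; auto. intros z az; apply N; eauto. }
    assert (HP : forall A', (forall a, A' a -> A a) -> ~ countable_fam A' -> exists x y, A' x /\ A' y /\ set_lt lt x y /\ True).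
    { intros A' Hs Hu'. destruct (pair_exists w Hw A' (fun a H => Hfin a (Hs a H)) (fun a b Ha Hb => Hd a b (Hs a Ha) (Hs b Hb)) Hu') as [x [y [? [? ?]]]].
      exists x, y; auto. }
    destruct (capture w Hw HF Hcap A (fun _ _ => True) Hfin Hne Hd Hu HP) as
      [x0 [y0 [x1 [y1 [l [Fa [G [R [Ax0 [Ay0 [Ax1 [Ay1 [_ [_ [L0 [L1 [Hl [HFa [HD [S0 [S1 [Pre1 Pre2]]]]]]]]]]]]]]]]]]]]]].
    destruct (dec_facts HD) as [_ [_ [_ [_ [_ H01]]]]].
    exists y0, x1. split; auto. split; auto. split.
    { intros u v yu xv. apply H01; [apply S0|apply S1]; auto. }
    intros a b ya xb. destruct (Pre2 b xb) as [b' [xb' Hs]].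
    destruct (S0 a (or_intror ya)) as [Ga Ra]. destruct (S1 b (or_introl xb)) as [Gb Rb].
    apply (o_zero w Hw HF a b l b').
    + exists Fa, G, R. repeat (split; [solve [auto]|]). split; [apply S0; auto|]. auto.
    + intro L. apply (om_asym Hw _ _ L). apply L0; auto.
  - destruct (classic (exists a, A a /\ forall z, ~ a z)) as [[a [Aa Ea]]|Ne].
    { exists a, a. split; auto. split; auto. split; intros x y ax; exfalso; apply (Ea x ax). }
    assert (Hne : forall a, A a -> exists z, a z).
    { intros a Aa. apply NNPP; intro N; apply Ne; exists a; split; auto. intros z az; apply N; eauto. }
    assert (HP : forall A', (forall a, A' a -> A a) -> ~ countable_fam A' -> exists x y, A' x /\ A' y /\ set_lt lt x y /\ (forall u v, x u -> y v -> ocol w lt m r F u v = n)).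
    { intros A' Hs Hu'. destruct (IHn A' (fun a H => Hfin a (Hs a H)) (fun a b Ha Hb => Hd a b (Hs a Ha) (Hs b Hb)) Hu') as [x [y [? [? [? ?]]]]].
      exists x, y; auto. }
    destruct (capture w Hw HF Hcap A (fun x y => forall u v, x u -> y v -> ocol w lt m r F u v = n) Hfin Hne Hd Hu HP) as
      [x0 [y0 [x1 [y1 [l [Fa [G [R [Ax0 [Ay0 [Ax1 [Ay1 [P0 [_ [L0 [L1 [Hl [HFa [HD [S0 [S1 [Pre1 Pre2]]]]]]]]]]]]]]]]]]]]]].
    destruct (dec_facts HD) as [_ [_ [_ [_ [_ H01]]]]].
    exists x0, y1. split; auto. split; auto. split.
    { intros u v xu yv. apply H01; [apply S0|apply S1]; auto. }
    intros a b xa yb. destruct (Pre1 b yb) as [b' [yb' Hs]].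
    destruct (S0 a (or_introl xa)) as [Ga Ra]. destruct (S1 b (or_intror yb)) as [Gb Rb].
    rewrite (o_step w Hw HF a b l b').
    + f_equal. apply P0; auto.
    + exists Fa, G, R. repeat (split; [solve [auto]|]). split; [apply S0; auto|]. auto.
    + apply L0; auto.
Qed.

Definition rseq (k : nat) : nat := match k with 0 => 0 | S k' => k' - Nat.sqrt k' * Nat.sqrt k' end.
Fixpoint mseq (k : nat) : nat := match k with 0 => 1 | S k' => rseq (S k') + (mseq k' - rseq (S k')) * 2 end.

Lemma rseq_le k : rseq (S k) <= k.
Proof. simpl; lia. Qed.

Lemma mseq_ge k : k + 1 <= mseq k.
Proof. induction k; simpl; auto. pose proof (rseq_le k). simpl in H. lia. Qed.

Lemma type_ok : is_type mseq two rseq.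
Proof.
  split; [reflexivity|]. split; [unfold two; lia|]. split.
  - intros j N. set (s := j + N + 1). exists (S (s * s + j)). split; [nia|].
    simpl. rewrite (Nat.sqrt_unique (s * s + j) s); [lia|]. nia.
  - split.
    + intro k. rewrite Nat.add_1_r. pose proof (rseq_le k). pose proof (mseq_ge k). lia.
    + intro k. rewrite Nat.add_1_r. reflexivity.
Qed.

Theorem mainTheorem9 (W : Type) (lt : W -> W -> Prop)
  (Homega1 : is_omega1 lt) (HCA2 : CA lt 2) :
  exists o : W -> W -> nat,
    forall A : (W -> Prop) -> Prop,
      (forall a, A a -> finite a) ->
      (forall a b, A a -> A b -> a <> b -> forall x, ~ (a x /\ b x)) ->
      ~ countable_fam A ->
      forall k : nat, exists a b, A a /\ A b /\ set_lt lt a b /\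
        (forall x y, a x -> b y -> o x y = k).
Proof.
  destruct (classic (inhabited W)) as [[w]|NW].
  2:{ exfalso. destruct Homega1 as [_ [_ [_ [_ [Hu _]]]]]. apply Hu. exists (fun _ => 0).
      intros x; exfalso; apply NW; constructor; exact x. }
  destruct (HCA2 mseq two rseq type_ok) as [F [HF Hcap]]. { unfold two; lia. }
  exists (ocol w lt mseq rseq F).
  intros A Hfin Hd Hu k. apply (good w Homega1 HF Hcap k A Hfin Hd Hu).
Qed.
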